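(* Fix $q\ge2$. Let $\Delta_n=\log_q n-\lceil\log_q n\rceil$ and $$F(\Delta)=\max_{z\in\{-2,-1,0\}}\Big\{\Delta-z-(\log_q e)(q-1)q^{\Delta-z-1}\Big\}.$$ Then $$\lim_{n\to\infty}\frac{\mathcal C_1(n,q)}{\frac{q^n}{n}\big(\frac{q-1}{q}\big)^2q^{F(\Delta_n)}}=1,$$ and for every $\Delta\in(-1,0]$, $\big(\frac{q-1}{q}\big)^2q^{F(\Delta)}\le\frac{q-1}{eq}$. Moreover, the latter inequality is tight: along any subsequence of $n\to\infty$ with $\Delta_n=-\log_q(q-1)$ (or $\Delta_n\to-\log_q(q-1)$), $\mathcal C_1(n,q)\cdot\frac{n}{q^n}\to\frac{q-1}{eq}$.
   Context: $\Sigma_q=\{0,\dots,q-1\}$. For integers $1\le k<n$, $\mathcal C_1(n,q,k)$ is the set of $\vec a\in\Sigma_q^n$ with $a_1=\dots=a_k=0$, $a_{k+1}\ne0$, $a_n\ne0$, and $(a_{k+2},\dots,a_{n-1})$ containing no run of $k$ consecutive zeros. $\mathcal C_1(n,q)=\max_{1\le k<n}|\mathcal C_1(n,q,k)|$. *)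

(* Defs.v *)
From Stdlib Require Import Reals Lra Lia Arith List Bool.
Import ListNotations.
Open Scope R_scope.

Fixpoint words (q n : nat) : list (list nat) :=
  match n with
  | O => [ [] ]
  | S m => flat_map (fun d => map (cons d) (words q m)) (seq 0 q)
  end.

Definition has_zero_run (k : nat) (s : list nat) : bool :=
  existsb (fun i => Nat.leb (i + k) (length s) &&
                    forallb (fun j => Nat.eqb (nth (i + j) s 1%nat) 0%nat) (seq 0 k))
          (seq 0 (length s)).

(* Membership in C_1(n,q,k), for a word a = (a_1,...,a_n) stored 0-based:
   a_i = nth (i-1) a.  Conditions: a_1=...=a_k=0, a_{k+1}<>0, a_n<>0,
   and the middle block (a_{k+2},...,a_{n-1}) has no run of k zeros. *)
Definition in_C1 (n k : nat) (a : list nat) : bool :=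
  forallb (fun i => Nat.eqb (nth i a 0%nat) 0%nat) (seq 0 k) &&
  negb (Nat.eqb (nth k a 0%nat) 0%nat) &&
  negb (Nat.eqb (nth (n - 1) a 0%nat) 0%nat) &&
  negb (has_zero_run k (firstn (n - 2 - k) (skipn (k + 1) a))).

Definition C1k (n q k : nat) : nat :=
  length (filter (in_C1 n k) (words q n)).

(* C_1(n,q) = max_{1 <= k < n} |C_1(n,q,k)|  (0 if n <= 1, irrelevant for limits) *)
Definition C1max (n q : nat) : nat :=
  fold_right Nat.max 0%nat (map (C1k n q) (seq 1 (n - 1))).

Definition logq (q : nat) (x : R) : R := ln x / ln (INR q).

Definition Rceil (x : R) : R := - IZR (Int_part (- x)).

Definition Deltan (q n : nat) : R := logq q (INR n) - Rceil (logq q (INR n)).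

Definition Fterm (q : nat) (D z : R) : R :=
  D - z - (logq q (exp 1)) * (INR q - 1) * Rpower (INR q) (D - z - 1).

Definition Fq (q : nat) (D : R) : R :=
  Rmax (Fterm q D (-2)) (Rmax (Fterm q D (-1)) (Fterm q D 0)).

(* Main.v *)
Require Import Defs.
From Stdlib Require Import Reals Lra Lia Arith List Bool.
Import ListNotations.

Local Open Scope nat_scope.

Definition cnt (P : list nat -> bool) (W : list (list nat)) : nat := length (filter P W).

Lemma cnt_map_cons (P : list nat -> bool) d W :
  cnt P (map (cons d) W) = cnt (fun w => P (d :: w)) W.
Proof. unfold cnt; induction W as [|w W IH]; simpl; auto. destruct (P (d :: w)); simpl; auto. Qed.

Lemma cnt_app P W1 W2 : cnt P (W1 ++ W2) = cnt P W1 + cnt P W2.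
Proof. unfold cnt; rewrite filter_app, length_app; auto. Qed.

Lemma cnt_flat P W l :
  cnt P (flat_map (fun d => map (cons d) W) l) =
  list_sum (map (fun d => cnt (fun w => P (d :: w)) W) l).
Proof. induction l as [|d l IH]; simpl; auto. rewrite cnt_app, cnt_map_cons, IH; auto. Qed.

Lemma cnt_words_S P q m :
  cnt P (words q (S m)) = list_sum (map (fun d => cnt (fun w => P (d :: w)) (words q m)) (seq 0 q)).
Proof. simpl. apply cnt_flat. Qed.

Lemma cnt_ext_in P1 P2 W : (forall w, In w W -> P1 w = P2 w) -> cnt P1 W = cnt P2 W.
Proof. intros H; unfold cnt; rewrite (filter_ext_in _ _ _ H); auto. Qed.

Lemma cnt_andb_l (b : bool) P W : cnt (fun w => b && P w) W = if b then cnt P W else 0.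
Proof. destruct b; simpl. apply cnt_ext_in; auto. unfold cnt; induction W; simpl; auto. Qed.

Lemma words_len q m w : In w (words q m) -> length w = m.
Proof.
  revert w; induction m as [|m IH]; simpl; intros w H.
  - destruct H as [H|[]]; subst; auto.
  - apply in_flat_map in H. destruct H as [d [_ H]]. apply in_map_iff in H.
    destruct H as [w' [<- H]]. simpl; f_equal; auto.
Qed.

Lemma list_sum_map_mult (f : nat -> nat) c l :
  list_sum (map (fun d => f d * c) l) = list_sum (map f l) * c.
Proof. induction l; simpl; auto. rewrite IHl. lia. Qed.

Lemma list_sum_const (f : nat -> nat) c l : (forall d, In d l -> f d = c) ->
  list_sum (map f l) = length l * c.
Proof. induction l as [|x l IHl]; simpl; intros H. auto. rewrite (H x) by auto. rewrite IHl by auto. lia. Qed.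

Lemma cnt_prod q a b (P P1 P2 : list nat -> bool) :
  (forall l1 l2, length l1 = a -> length l2 = b -> P (l1 ++ l2) = P1 l1 && P2 l2) ->
  cnt P (words q (a + b)) = cnt P1 (words q a) * cnt P2 (words q b).
Proof.
  revert P P1; induction a as [|a IH]; intros P P1 H.
  - simpl. rewrite (cnt_ext_in P (fun w => P1 [] && P2 w)).
    + rewrite cnt_andb_l. unfold cnt; simpl. destruct (P1 []); simpl; lia.
    + intros w Hw. apply (H [] w); eauto using words_len.
  - rewrite plus_Sn_m, !cnt_words_S, <- list_sum_map_mult. f_equal. apply map_ext_in.
    intros d _. apply IH. intros l1 l2 H1 H2. apply (H (d :: l1) l2); simpl; auto.
Qed.

Fixpoint av (k : nat) (s : list nat) (r : nat) : bool :=
  match s with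
  | [] => true
  | x :: s' => if Nat.eqb x 0 then Nat.ltb (S r) k && av k s' (S r) else av k s' 0
  end.

Lemma hzr_iff k s : 1 <= k -> (has_zero_run k s = true <->
  exists i, i + k <= length s /\ forall j, j < k -> nth (i + j) s 1 = 0).
Proof.
  intros Hk. unfold has_zero_run. rewrite existsb_exists. split.
  - intros [i [Hi H]]. apply andb_true_iff in H. destruct H as [H1 H2].
    apply Nat.leb_le in H1. exists i. split; auto. intros j Hj.
    rewrite forallb_forall in H2. apply Nat.eqb_eq, H2, in_seq. lia.
  - intros [i [H1 H2]]. exists i. split. apply in_seq; lia.
    apply andb_true_iff; split. apply Nat.leb_le; auto.
    apply forallb_forall. intros j Hj. apply in_seq in Hj. apply Nat.eqb_eq, H2. lia.
Qed.

Lemma repeat_app0 r s : repeat 0 r ++ 0 :: s = repeat 0 (S r) ++ s.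
Proof. induction r; simpl; auto. rewrite IHr; auto. Qed.

Lemma av_iff k s : forall r, r < k -> (av k s r = false <->
  exists i, i + k <= r + length s /\ forall j, j < k -> nth (i + j) (repeat 0 r ++ s) 1 = 0).
Proof.
  induction s as [|x s IH]; intros r Hr.
  - simpl. split; [discriminate|]. intros [i [H _]]; lia.
  - simpl av. destruct (Nat.eqb_spec x 0) as [Hx|Hx].
    + subst x. rewrite repeat_app0. simpl length.
      destruct (Nat.ltb_spec (S r) k) as [Hl|Hl].
      * simpl. rewrite IH by auto. replace (S r + length s) with (r + S (length s)) by lia. tauto.
      * cbn [andb]. split; auto. intros _. exists 0. split. lia.
        intros j Hj. rewrite app_nth1. rewrite (nth_indep _ _ 0) by (rewrite repeat_length; lia). apply nth_repeat. rewrite repeat_length. lia.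
    + rewrite IH by lia. simpl length. split.
      * intros [i [H1 H2]]. exists (i + r + 1). split. lia.
        intros j Hj. rewrite app_nth2; rewrite repeat_length; [|lia].
        replace (i + r + 1 + j - r) with (S (i + j)) by lia. simpl. apply H2; auto.
      * intros [i [H1 H2]]. destruct (Nat.le_gt_cases i r) as [Hir|Hir].
        -- exfalso. specialize (H2 (r - i) ltac:(lia)).
           rewrite app_nth2 in H2 by (rewrite repeat_length; lia). rewrite repeat_length in H2.
           replace (i + (r - i) - r) with 0 in H2 by lia. simpl in H2. auto.
        -- exists (i - r - 1). split. lia. intros j Hj. specialize (H2 j Hj).
           rewrite app_nth2 in H2 by (rewrite repeat_length; lia). rewrite repeat_length in H2.
           replace (i + j - r) with (S (i - r - 1 + j)) in H2 by lia. simpl in H2. auto.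
Qed.

Lemma hzr_av k s : 1 <= k -> has_zero_run k s = negb (av k s 0).
Proof.
  intros Hk. destruct (has_zero_run k s) eqn:E; destruct (av k s 0) eqn:F; auto.
  - apply hzr_iff in E; auto. assert (av k s 0 = false) by (apply (av_iff k s 0); [lia|exact E]). congruence.
  - apply (av_iff k s 0) in F; [|lia]. simpl in F. apply (hzr_iff k s) in F; auto. congruence.
Qed.

Definition Nst q k r L := cnt (fun w => av k w r) (words q L).
Definition A q k L := Nst q k 0 L.

Lemma N_0 q k r : Nst q k r 0 = 1.
Proof. reflexivity. Qed.

Lemma N_S q k r L : 1 <= q ->
  Nst q k r (S L) = (if Nat.ltb (S r) k then Nst q k (S r) L else 0) + (q - 1) * Nst q k 0 L.
Proof.
  intros Hq. unfold Nst. rewrite cnt_words_S. destruct q as [|q']; [lia|].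
  rewrite <- (Nat.add_0_r 1) at 1. simpl seq. simpl map. simpl list_sum. simpl av.
  rewrite cnt_andb_l. f_equal.
  rewrite (list_sum_const _ (cnt (fun w => av k w 0) (words (S q') L))).
  - rewrite length_seq. lia.
  - intros d Hd. apply in_seq in Hd. apply cnt_ext_in. intros w _. simpl.
    destruct (Nat.eqb_spec d 0); [lia|auto].
Qed.

Lemma N_init q k : 1 <= q -> forall L r, r + L < k -> Nst q k r L = q ^ L.
Proof.
  intros Hq L. induction L as [|L IH]; intros r H. reflexivity.
  rewrite N_S by auto. destruct (Nat.ltb_spec (S r) k); [|lia].
  rewrite (IH (S r)) by lia. rewrite (IH 0) by lia. simpl. nia.
Qed.

Lemma N_kk q k : 1 <= q -> forall L r, 1 <= L -> r + L = k -> Nst q k r L + 1 = q ^ L.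
Proof.
  intros Hq L. induction L as [|L IH]; intros r H1 H. lia.
  rewrite N_S by auto. rewrite (N_init q k Hq L 0) by lia.
  destruct (Nat.ltb_spec (S r) k).
  - specialize (IH (S r) ltac:(lia) ltac:(lia)). simpl. nia.
  - assert (L = 0) by lia. subst. simpl. lia.
Qed.

Lemma A_init q k L : 1 <= q -> L < k -> A q k L = q ^ L.
Proof. intros; apply N_init; auto. Qed.

Lemma A_k q k : 1 <= q -> 1 <= k -> A q k k + 1 = q ^ k.
Proof. intros; apply N_kk; auto. Qed.

Lemma Nrec q k : 1 <= q -> forall m, 1 <= m <= k -> forall P,
  Nst q k (k - m) (P + m + 1) + (q - 1) * A q k P = Nst q k (k - m) (P + m) + (q - 1) * A q k (P + m).
Proof.
  intros Hq m. induction m as [|m IH]; intros Hm P. lia.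
  destruct (Nat.eq_dec m 0) as [->|Hm0].
  - assert (HL : forall X, Nst q k (k - 1) (S X) = (q - 1) * A q k X).
    { intros X. rewrite N_S by auto. replace (S (k - 1)) with k by lia.
      rewrite Nat.ltb_irrefl. reflexivity. }
    replace (P + 1 + 1) with (S (P + 1)) by lia. rewrite HL.
    replace (P + 1) with (S P) by lia. rewrite HL. lia.
  - replace (P + S m + 1) with (S (P + m + 1)) by lia.
    replace (P + S m) with (S (P + m)) by lia. rewrite !N_S by auto.
    replace (S (k - S m)) with (k - m) by lia.
    destruct (Nat.ltb_spec (k - m) k); [|lia].
    specialize (IH ltac:(lia) P). unfold A in *.
    replace (S (P + m)) with (P + m + 1) by lia. lia.
Qed.

Lemma A_rec q k P : 1 <= q -> 1 <= k -> A q k (P + k + 1) + (q - 1) * A q k P = q * A q k (P + k).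
Proof.
  intros Hq Hk. pose proof (Nrec q k Hq k ltac:(lia) P) as H.
  rewrite Nat.sub_diag in H. unfold A in *. nia.
Qed.

Definition Zk k (l : list nat) := forallb (fun i => Nat.eqb (nth i l 0) 0) (seq 0 k).
Definition NZ (l : list nat) := negb (Nat.eqb (nth 0 l 0) 0).

Lemma forallb_seq_S (f : nat -> bool) a n : forallb f (seq (S a) n) = forallb (fun i => f (S i)) (seq a n).
Proof. revert a; induction n; intros a; simpl; auto. rewrite IHn; auto. Qed.

Lemma list_sum_cons x l : list_sum (x :: l) = x + list_sum l.
Proof. reflexivity. Qed.

Lemma cnt_Zk q k : 1 <= q -> cnt (Zk k) (words q k) = 1.
Proof.
  intros Hq. induction k as [|k IH]. reflexivity.
  rewrite cnt_words_S. destruct q as [|q']; [lia|].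
  change (seq 0 (S q')) with (0 :: seq 1 q'). cbn [map]. rewrite list_sum_cons.
  rewrite (list_sum_const _ 0).
  - rewrite Nat.mul_0_r, Nat.add_0_r. rewrite <- IH.
    apply cnt_ext_in. intros w _. unfold Zk. simpl seq. simpl forallb.
    rewrite forallb_seq_S. reflexivity.
  - intros d Hd. apply in_seq in Hd. unfold cnt.
    rewrite (filter_ext_in _ (fun _ => false)). clear. induction (words (S q') k); simpl; auto.
    intros w _. unfold Zk. simpl. destruct d; [lia|reflexivity].
Qed.

Lemma cnt_NZ q : 1 <= q -> cnt NZ (words q 1) = q - 1.
Proof.
  intros Hq. rewrite cnt_words_S. destruct q as [|q']; [lia|].
  change (seq 0 (S q')) with (0 :: seq 1 q'). cbn [map]. rewrite list_sum_cons.
  rewrite (list_sum_const _ 1).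
  - rewrite length_seq. unfold cnt, NZ. simpl. lia.
  - intros d Hd. apply in_seq in Hd. unfold cnt, NZ. simpl.
    destruct d; [lia|reflexivity].
Qed.

Lemma cnt_noRun q k L : 1 <= k -> cnt (fun m => negb (has_zero_run k m)) (words q L) = A q k L.
Proof.
  intros Hk. unfold A, Nst. apply cnt_ext_in. intros w _. rewrite hzr_av by auto.
  apply negb_involutive.
Qed.

Lemma skipn_len_app (l r : list nat) : skipn (length l) (l ++ r) = r.
Proof. induction l; simpl; auto. Qed.

Lemma firstn_len_app (l r : list nat) : firstn (length l) (l ++ r) = l.
Proof. induction l; simpl; auto. rewrite IHl; auto. Qed.

Lemma nth_len_app (l : list nat) e : nth (length l) (l ++ [e]) 0 = e.
Proof. induction l; simpl; auto. Qed.

Lemma forallb_ext_in (f g : nat -> bool) l : (forall x, In x l -> f x = g x) -> forallb f l = forallb g l.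
Proof. induction l; simpl; intros H; auto. rewrite H by auto. rewrite IHl by auto. reflexivity. Qed.

Lemma C1k_formula n q k L : 1 <= q -> 1 <= k -> n = k + L + 2 ->
  C1k n q k = (q - 1) * (A q k L * (q - 1)).
Proof.
  intros Hq Hk Hn. unfold C1k. fold (cnt (in_C1 n k) (words q n)).
  replace (words q n) with (words q (k + (1 + (L + 1)))) by (f_equal; lia).
  set (P3 := fun r : list nat => negb (has_zero_run k (firstn L r)) && NZ [nth L r 0]).
  set (P2 := fun rest : list nat => NZ rest && P3 (tl rest)).
  rewrite (cnt_prod q k (1 + (L + 1)) _ (Zk k) P2).
  - rewrite cnt_Zk by auto. rewrite Nat.mul_1_l.
    rewrite (cnt_prod q 1 (L + 1) P2 NZ P3).
    + rewrite cnt_NZ by auto. f_equal.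
      rewrite (cnt_prod q L 1 P3 (fun m => negb (has_zero_run k m)) NZ).
      * rewrite cnt_noRun, cnt_NZ by auto. reflexivity.
      * intros l1 l2 H1 H2. unfold P3. rewrite <- H1, firstn_len_app.
        destruct l2 as [|e [|]]; simpl in H2; try lia. rewrite nth_len_app. reflexivity.
    + intros l1 l2 H1 H2. destruct l1 as [|d [|]]; simpl in H1; try lia. reflexivity.
  - intros l1 rest H1 H2. unfold in_C1.
    assert (E1 : forallb (fun i => Nat.eqb (nth i (l1 ++ rest) 0) 0) (seq 0 k) = Zk k l1).
    { unfold Zk. apply forallb_ext_in. intros i Hi. apply in_seq in Hi.
      rewrite app_nth1 by lia. reflexivity. }
    destruct rest as [|d r]; simpl in H2; [lia|].
    assert (E2 : nth k (l1 ++ d :: r) 0 = d).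
    { rewrite app_nth2 by lia. rewrite H1, Nat.sub_diag. reflexivity. }
    assert (E3 : nth (n - 1) (l1 ++ d :: r) 0 = nth L r 0).
    { rewrite app_nth2 by lia. rewrite H1. replace (n - 1 - k) with (S L) by lia. reflexivity. }
    assert (E4 : firstn (n - 2 - k) (skipn (k + 1) (l1 ++ d :: r)) = firstn L r).
    { replace (l1 ++ d :: r) with ((l1 ++ [d]) ++ r) by (rewrite <- app_assoc; reflexivity).
      replace (k + 1) with (length (l1 ++ [d])) by (rewrite length_app; simpl; lia).
      rewrite skipn_len_app. f_equal. lia. }
    rewrite E1, E2, E3, E4. unfold P2, P3, NZ. simpl tl. simpl nth.
    destruct (Zk k l1), (Nat.eqb d 0), (Nat.eqb (nth L r 0) 0), (has_zero_run k (firstn L r)); reflexivity.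
Qed.

Lemma C1k_last n q k : 1 <= q -> 1 <= k -> n = k + 1 -> C1k n q k = q - 1.
Proof.
  intros Hq Hk Hn. unfold C1k. fold (cnt (in_C1 n k) (words q n)).
  subst n. rewrite (cnt_prod q k 1 _ (Zk k) NZ).
  - rewrite cnt_Zk, cnt_NZ by auto. lia.
  - intros l1 l2 H1 H2. unfold in_C1.
    assert (E1 : forallb (fun i => Nat.eqb (nth i (l1 ++ l2) 0) 0) (seq 0 k) = Zk k l1).
    { unfold Zk. apply forallb_ext_in. intros i Hi. apply in_seq in Hi.
      rewrite app_nth1 by lia. reflexivity. }
    destruct l2 as [|e [|]]; simpl in H2; try lia.
    rewrite E1. replace (k + 1 - 1) with k by lia. replace (k + 1 - 2 - k) with 0 by lia.
    rewrite app_nth2 by lia. rewrite H1, Nat.sub_diag. simpl firstn.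
    unfold NZ. simpl nth. destruct (Zk k l1), (Nat.eqb e 0); reflexivity.
Qed.

Lemma fold_max_ge (l : list nat) y : In y l -> y <= fold_right Nat.max 0 l.
Proof. induction l; simpl; intros H; [contradiction|]. destruct H as [H|H]; [subst; lia|]. specialize (IHl H). lia. Qed.

Lemma fold_max_attained (l : list nat) : fold_right Nat.max 0 l = 0 \/ In (fold_right Nat.max 0 l) l.
Proof.
  induction l as [|x l IH]; simpl; auto. destruct (Nat.max_spec x (fold_right Nat.max 0 l)) as [[H E]|[H E]]; rewrite E.
  - destruct IH; auto.
  - auto.
Qed.

Lemma C1max_ge n q k : 1 <= k -> k + 1 <= n -> C1k n q k <= C1max n q.
Proof.
  intros. unfold C1max. apply fold_max_ge. apply in_map. apply in_seq. lia.
Qed.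

Lemma C1max_cases n q : C1max n q = 0 \/ exists k, 1 <= k /\ k + 1 <= n /\ C1max n q = C1k n q k.
Proof.
  unfold C1max. destruct (fold_max_attained (map (C1k n q) (seq 1 (n - 1)))) as [H|H]; auto.
  right. apply in_map_iff in H. destruct H as [k [E H]]. apply in_seq in H. exists k. split; [lia|split; [lia|auto]].
Qed.
Open Scope R_scope.

Lemma Ar_init q k L : (1 <= q)%nat -> (L < k)%nat -> INR (A q k L) = INR q ^ L.
Proof. intros; rewrite A_init, pow_INR; auto. Qed.

Lemma Ar_k q k : (1 <= q)%nat -> (1 <= k)%nat -> INR (A q k k) = INR q ^ k - 1.
Proof. intros. pose proof (A_k q k H H0). rewrite <- pow_INR, <- H1, plus_INR. simpl. lra. Qed.

Lemma Ar_rec q k P : (1 <= q)%nat -> (1 <= k)%nat ->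
  INR (A q k (P + k + 1)) = INR q * INR (A q k (P + k)) - (INR q - 1) * INR (A q k P).
Proof.
  intros Hq Hk. pose proof (A_rec q k P Hq Hk) as H. apply (f_equal INR) in H.
  rewrite plus_INR, !mult_INR, minus_INR in H by auto. simpl in H. lra.
Qed.

Lemma Ar_step_le q k L : (1 <= q)%nat -> (1 <= k)%nat -> INR (A q k (S L)) <= INR q * INR (A q k L).
Proof.
  intros Hq Hk. assert (HQ : 1 <= INR q) by (apply (le_INR 1); auto).
  destruct (Nat.lt_ge_cases (S L) k).
  - rewrite !Ar_init by (auto; lia). simpl. lra.
  - destruct (Nat.eq_dec (S L) k) as [E|E].
    + rewrite <- E, Ar_k, Ar_init by (auto; lia). simpl. lra.
    + replace (S L) with ((L - k) + k + 1)%nat by lia. rewrite Ar_rec by auto.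
      replace (L - k + k)%nat with L by lia. pose proof (pos_INR (A q k (L - k))). nra.
Qed.

Lemma Ar_le_pow q k L : (1 <= q)%nat -> (1 <= k)%nat -> INR (A q k L) <= INR q ^ L.
Proof.
  intros Hq Hk. assert (HQ : 1 <= INR q) by (apply (le_INR 1); auto).
  induction L. unfold A, Nst, cnt. simpl. lra.
  pose proof (Ar_step_le q k L Hq Hk). simpl. nra.
Qed.

Lemma Ar_iter_le q k P m : (1 <= q)%nat -> (1 <= k)%nat -> INR (A q k (P + m)) <= INR q ^ m * INR (A q k P).
Proof.
  intros Hq Hk. assert (HQ : 1 <= INR q) by (apply (le_INR 1); auto).
  induction m. rewrite Nat.add_0_r. simpl. lra.
  replace (P + S m)%nat with (S (P + m)) by lia. pose proof (Ar_step_le q k (P + m) Hq Hk).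
  simpl. pose proof (pow_le (INR q) m ltac:(lra)). nra.
Qed.

Definition dl q k := (INR q - 1) / INR q ^ (S k).

Lemma pow_le_one x n : 0 <= x <= 1 -> x ^ n <= 1.
Proof. intros H. rewrite <- (pow1 n). apply pow_incr. lra. Qed.

Lemma pow_decr x m n : 0 <= x <= 1 -> (m <= n)%nat -> x ^ n <= x ^ m.
Proof.
  intros H Hmn. replace n with (m + (n - m))%nat by lia. rewrite pow_add.
  pose proof (pow_le x m ltac:(lra)). pose proof (pow_le_one x (n - m) H). nra.
Qed.

Lemma Q2 q : (2 <= q)%nat -> 2 <= INR q.
Proof. intros; apply (le_INR 2); auto. Qed.

Lemma dl_eq q k : (2 <= q)%nat -> dl q k * INR q ^ S k = INR q - 1.
Proof. intros Hq. pose proof (Q2 q Hq). unfold dl. field. apply pow_nonzero. lra. Qed.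

Lemma dl_pos q k : (2 <= q)%nat -> 0 < dl q k.
Proof.
  intros Hq. pose proof (Q2 q Hq). pose proof (dl_eq q k Hq).
  pose proof (pow_lt (INR q) (S k) ltac:(lra)). nra.
Qed.

Lemma dl_le q k : (2 <= q)%nat -> (1 <= k)%nat -> 4 * dl q k <= 1.
Proof.
  intros Hq Hk. pose proof (Q2 q Hq). pose proof (dl_eq q k Hq).
  assert (INR q ^ 2 <= INR q ^ S k) by (apply Rle_pow; lia || lra).
  pose proof (pow_lt (INR q) (S k) ltac:(lra)). simpl in *. nra.
Qed.

Lemma Ar_upper q k L : (2 <= q)%nat -> (1 <= k)%nat ->
  INR (A q k L) * (1 - dl q k) ^ k <= INR q ^ L * (1 - dl q k) ^ L.
Proof.
  intros Hq Hk. pose proof (Q2 q Hq) as HQ.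
  assert (Hd : 0 <= dl q k <= 1) by (pose proof (dl_pos q k Hq); pose proof (dl_le q k Hq Hk); lra).
  destruct (Nat.le_gt_cases L k).
  - pose proof (Ar_le_pow q k L ltac:(lia) Hk).
    assert ((1 - dl q k) ^ k <= (1 - dl q k) ^ L).
    { apply pow_decr; [lra|lia]. }
    pose proof (pow_le (1 - dl q k) k ltac:(lra)). pose proof (pos_INR (A q k L)).
    apply Rmult_le_compat; auto.
  - replace L with (k + (L - k))%nat by lia. generalize (L - k)%nat as P. intros P.
    assert (Hmain : INR (A q k (k + P)) <= INR q ^ k * (INR q * (1 - dl q k)) ^ P).
    { induction P.
      - rewrite Nat.add_0_r. pose proof (Ar_le_pow q k k ltac:(lia) Hk). simpl. lra.
      - replace (k + S P)%nat with (P + k + 1)%nat by lia. rewrite Ar_rec by (auto; lia).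
        replace (P + k)%nat with (k + P)%nat by lia.
        pose proof (Ar_iter_le q k P k ltac:(lia) Hk) as Hit. replace (P + k)%nat with (k + P)%nat in Hit by lia.
        assert (HQk : 0 < INR q ^ k) by (apply pow_lt; lra).
        pose proof (dl_eq q k Hq) as Hde. simpl in Hde.
        assert (E : (INR q - 1) * INR (A q k P) >= INR q * dl q k * INR (A q k (k + P))).
        { rewrite <- Hde. apply Rle_ge.
          replace (dl q k * (INR q * INR q ^ k) * INR (A q k P)) with ((INR q * dl q k) * (INR q ^ k * INR (A q k P))) by ring.
          apply Rmult_le_compat_l; [|lra]. pose proof (dl_pos q k Hq). nra. }
        apply Rle_trans with ((INR q * (1 - dl q k)) * INR (A q k (k + P))). lra.
        simpl. replace (INR q ^ k * (INR q * (1 - dl q k) * (INR q * (1 - dl q k)) ^ P))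
          with ((INR q * (1 - dl q k)) * (INR q ^ k * (INR q * (1 - dl q k)) ^ P)) by ring.
        apply Rmult_le_compat_l; auto. apply Rmult_le_pos; lra. }
    rewrite pow_add. rewrite Rpow_mult_distr in Hmain.
    pose proof (pow_le (1 - dl q k) k ltac:(lra)).
    apply Rle_trans with (INR q ^ k * (INR q ^ P * (1 - dl q k) ^ P) * (1 - dl q k) ^ k).
    apply Rmult_le_compat_r; auto. rewrite !pow_add. right; ring.
Qed.

Lemma bern x n : 0 <= x <= 1 -> 1 - INR n * x <= (1 - x) ^ n.
Proof.
  intros H. induction n. simpl. lra.
  rewrite S_INR. simpl. pose proof (pow_le (1 - x) n ltac:(lra)). pose proof (pos_INR n). nra.
Qed.

Lemma Ar_iter_ge q k P m c : 0 <= c ->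
  (forall j, (P <= j < P + m)%nat -> c * INR (A q k j) <= INR (A q k (S j))) ->
  c ^ m * INR (A q k P) <= INR (A q k (P + m)).
Proof.
  intros Hc. induction m; intros H. rewrite Nat.add_0_r. simpl. lra.
  replace (P + S m)%nat with (S (P + m)) by lia.
  pose proof (H (P + m)%nat ltac:(lia)).
  assert (c ^ m * INR (A q k P) <= INR (A q k (P + m))) by (apply IHm; intros; apply H; lia).
  simpl. apply Rle_trans with (c * INR (A q k (P + m))); auto.
  rewrite Rmult_assoc. apply Rmult_le_compat_l; auto.
Qed.

Lemma Ar_coarse q k : (2 <= q)%nat -> (1 <= k)%nat -> 4 * INR k * dl q k <= 1 ->
  forall L, INR q * (1 - 2 * dl q k) * INR (A q k L) <= INR (A q k (S L)).
Proof.
  intros Hq Hk Hkd. pose proof (Q2 q Hq) as HQ. pose proof (dl_pos q k Hq) as Hd0.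
  pose proof (dl_le q k Hq Hk) as Hd1. pose proof (dl_eq q k Hq) as Hde. simpl in Hde.
  assert (HQk : 0 < INR q ^ k) by (apply pow_lt; lra).
  assert (H : forall L j, (j <= L)%nat -> INR q * (1 - 2 * dl q k) * INR (A q k j) <= INR (A q k (S j))).
  2:{ intros L; apply (H L); lia. }
  induction L; intros j Hj.
  - destruct (Nat.lt_ge_cases (S j) k).
    + rewrite !Ar_init by lia. simpl. pose proof (pow_le (INR q) j ltac:(lra)). nra.
    + assert (j = 0)%nat by lia. subst j. assert (k = 1)%nat by lia. subst k.
      rewrite Ar_k by lia. rewrite Ar_init by lia. simpl in *. nra.
  - destruct (Nat.le_gt_cases j L) as [HjL|HjL]; [apply IHL; auto|]. assert (j = S L) by lia. subst j. clear Hj HjL.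
    destruct (Nat.lt_ge_cases (S (S L)) k).
    + rewrite !Ar_init by lia. simpl. pose proof (pow_le (INR q) L ltac:(lra)). apply Rmult_le_compat_r; nra.
    + destruct (Nat.eq_dec (S (S L)) k) as [E|E].
      * rewrite <- E. rewrite Ar_k by lia. rewrite Ar_init by lia. rewrite E.
        assert (Hk' : INR q ^ k = INR q * INR q ^ S L) by (rewrite <- E; reflexivity).
        rewrite Hk' in Hde. rewrite Hk'.
        assert (0 <= dl q k * (INR q * INR q ^ S L)) by (apply Rmult_le_pos; nra).
        nra.
      * set (P := (S L - k)%nat). replace (S (S L)) with (P + k + 1)%nat by (unfold P; lia).
        replace (S L) with (P + k)%nat by (unfold P; lia). rewrite Ar_rec by lia.
        assert (Hit : (INR q * (1 - 2 * dl q k)) ^ k * INR (A q k P) <= INR (A q k (P + k))).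
        { apply Ar_iter_ge. apply Rmult_le_pos; lra. intros j Hj. apply IHL. unfold P in *. lia. }
        rewrite Rpow_mult_distr in Hit.
        pose proof (bern (2 * dl q k) k ltac:(lra)).
        assert (Hb : (1 - 2 * dl q k) ^ k >= 1/2) by nra.
        pose proof (pos_INR (A q k P)). pose proof (pos_INR (A q k (P + k))).
        assert (E2 : (INR q - 1) * INR (A q k P) <= 2 * dl q k * INR q * INR (A q k (P + k))).
        { rewrite <- Hde.
          apply Rle_trans with ((dl q k * INR q) * (2 * (1 - 2 * dl q k) ^ k * (INR q ^ k * INR (A q k P)))).
          - replace (dl q k * (INR q * INR q ^ k) * INR (A q k P)) with
              ((dl q k * INR q) * (1 * (INR q ^ k * INR (A q k P)))) by ring.
            apply Rmult_le_compat_l. nra. apply Rmult_le_compat_r. nra. lra.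
          - replace (2 * dl q k * INR q * INR (A q k (P + k))) with ((dl q k * INR q) * (2 * INR (A q k (P + k)))) by ring.
            apply Rmult_le_compat_l. nra. lra. }
        lra.
Qed.

Definition ep q k := dl q k / (1 - 2 * INR k * dl q k).

Lemma Ar_fine q k P : (2 <= q)%nat -> (1 <= k)%nat -> 4 * INR k * dl q k <= 1 ->
  INR q * (1 - ep q k) * INR (A q k (P + k)) <= INR (A q k (P + k + 1)).
Proof.
  intros Hq Hk Hkd. pose proof (Q2 q Hq) as HQ. pose proof (dl_pos q k Hq) as Hd0.
  pose proof (dl_le q k Hq Hk) as Hd1. pose proof (dl_eq q k Hq) as Hde. simpl in Hde.
  assert (HQk : 0 < INR q ^ k) by (apply pow_lt; lra).
  rewrite Ar_rec by lia.
  assert (Hit : (INR q * (1 - 2 * dl q k)) ^ k * INR (A q k P) <= INR (A q k (P + k))).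
  { apply Ar_iter_ge. apply Rmult_le_pos; lra. intros j _. apply Ar_coarse; auto. }
  rewrite Rpow_mult_distr in Hit.
  pose proof (bern (2 * dl q k) k ltac:(lra)) as Hb.
  pose proof (pos_INR (A q k P)). pose proof (pos_INR (A q k (P + k))).
  set (u := 1 - 2 * INR k * dl q k) in *.
  assert (Hu : u >= 1/2) by (unfold u; lra).
  assert (H1 : INR q ^ k * u * INR (A q k P) <= INR (A q k (P + k))).
  { apply Rle_trans with (INR q ^ k * (1 - 2 * dl q k) ^ k * INR (A q k P)); auto.
    apply Rmult_le_compat_r; auto. apply Rmult_le_compat_l; [lra|]. unfold u; lra. }
  assert (E2 : (INR q - 1) * INR (A q k P) * u <= dl q k * INR q * INR (A q k (P + k))).
  { rewrite <- Hde.
    replace (dl q k * (INR q * INR q ^ k) * INR (A q k P) * u) with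
      ((dl q k * INR q) * (INR q ^ k * u * INR (A q k P))) by ring.
    apply Rmult_le_compat_l; nra. }
  unfold ep. fold u.
  assert (E3 : (INR q - 1) * INR (A q k P) <= INR q * (dl q k / u) * INR (A q k (P + k))).
  { apply Rmult_le_reg_r with u. lra. unfold Rdiv.
    replace (INR q * (dl q k * / u) * INR (A q k (P + k)) * u) with (dl q k * INR q * INR (A q k (P + k))).
    auto. field. lra. }
  lra.
Qed.

Lemma Ar_lower q k P : (2 <= q)%nat -> (1 <= k)%nat -> 4 * INR k * dl q k <= 1 ->
  (INR q ^ k - 1) * (INR q * (1 - ep q k)) ^ P <= INR (A q k (k + P)).
Proof.
  intros Hq Hk Hkd. pose proof (Q2 q Hq) as HQ. pose proof (dl_pos q k Hq) as Hd0.
  assert (He : 0 <= ep q k <= 1).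
  { unfold ep. split. apply Rmult_le_pos; [lra|]. left; apply Rinv_0_lt_compat; lra.
    apply Rmult_le_reg_r with (1 - 2 * INR k * dl q k). lra. unfold Rdiv.
    rewrite Rmult_assoc, Rinv_l by lra. assert (1 <= INR k) by (apply (le_INR 1); lia). nra. }
  induction P.
  - rewrite Nat.add_0_r, Ar_k by lia. simpl. lra.
  - replace (k + S P)%nat with (P + k + 1)%nat by lia.
    apply Rle_trans with (INR q * (1 - ep q k) * INR (A q k (P + k))); [|apply Ar_fine; auto].
    replace (P + k)%nat with (k + P)%nat by lia. simpl.
    replace ((INR q ^ k - 1) * (INR q * (1 - ep q k) * (INR q * (1 - ep q k)) ^ P)) with
      ((INR q * (1 - ep q k)) * ((INR q ^ k - 1) * (INR q * (1 - ep q k)) ^ P)) by ring.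
    apply Rmult_le_compat_l; auto. apply Rmult_le_pos; lra.
Qed.
Open Scope R_scope.

Definition aa q := (INR q - 1) / INR q.
Definition h q t := t * exp (- aa q * t).

Lemma exp_le x y : x <= y -> exp x <= exp y.
Proof. intros [H|H]. left; apply exp_increasing; auto. subst; lra. Qed.

Lemma exp_pow_n x n : exp x ^ n = exp (INR n * x).
Proof. induction n. simpl. rewrite Rmult_0_l, exp_0. auto. rewrite S_INR. simpl. rewrite IHn, <- exp_plus. f_equal. ring. Qed.

Lemma aa_bounds q : (2 <= q)%nat -> 1/2 <= aa q < 1 /\ aa q * INR q = INR q - 1.
Proof.
  intros Hq. assert (HQ : 2 <= INR q) by (apply (le_INR 2); auto).
  assert (E : aa q * INR q = INR q - 1) by (unfold aa; field; lra).
  split; [split|]; auto; nra.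
Qed.

Lemma Fterm_h q D z : (2 <= q)%nat -> Rpower (INR q) (Fterm q D z) = h q (Rpower (INR q) (D - z)).
Proof.
  intros Hq. assert (HQ : 2 <= INR q) by (apply (le_INR 2); auto).
  assert (Hl : 0 < ln (INR q)) by (rewrite <- ln_1; apply ln_increasing; lra).
  unfold Fterm, logq, h. rewrite ln_exp.
  replace (Rpower (INR q) (D - z - 1)) with (Rpower (INR q) (D - z) / INR q).
  2:{ replace (D - z - 1) with ((D - z) + - (1)) by ring. rewrite Rpower_plus, Rpower_Ropp, Rpower_1 by lra. reflexivity. }
  set (R0 := Rpower (INR q) (D - z)).
  unfold Rpower at 1. replace ((D - z - 1 / ln (INR q) * (INR q - 1) * (R0 / INR q)) * ln (INR q))
    with ((D - z) * ln (INR q) + - aa q * R0). 2:{ unfold aa. field. lra. }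
  rewrite exp_plus. reflexivity.
Qed.

Lemma Rpower_Rmax b x y : 1 < b -> Rpower b (Rmax x y) = Rmax (Rpower b x) (Rpower b y).
Proof.
  intros Hb. unfold Rmax. destruct (Rle_dec x y) as [H|H]; destruct (Rle_dec (Rpower b x) (Rpower b y)) as [H'|H']; auto.
  - exfalso. apply H'. apply Rle_Rpower; lra.
  - destruct (Rle_lt_or_eq_dec _ _ H') as [H2|H2]. exfalso. apply Rnot_le_lt in H.
    pose proof (Rpower_lt b y x Hb H). lra. auto.
Qed.

Lemma FqM q D : (2 <= q)%nat -> Rpower (INR q) (Fq q D) =
  Rmax (h q (Rpower (INR q) (D + 2))) (Rmax (h q (Rpower (INR q) (D + 1))) (h q (Rpower (INR q) D))).
Proof.
  intros Hq. assert (HQ : 2 <= INR q) by (apply (le_INR 2); auto).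
  unfold Fq. rewrite !Rpower_Rmax by lra. rewrite !Fterm_h by auto.
  replace (D - -2) with (D + 2) by ring. replace (D - -1) with (D + 1) by ring. replace (D - 0) with D by ring.
  reflexivity.
Qed.

Lemma h_max q t : (2 <= q)%nat -> h q t <= / (aa q * exp 1).
Proof.
  intros Hq. destruct (aa_bounds q Hq) as [[Ha1 Ha2] _].
  pose proof (exp_ineq1_le (aa q * t - 1)).
  unfold h. rewrite Rinv_mult.
  assert (E : exp (aa q * t - 1) = exp (aa q * t) * / exp 1).
  { unfold Rminus. rewrite exp_plus, exp_Ropp. auto. }
  assert (0 < exp (- aa q * t)) by apply exp_pos.
  assert (E2 : exp (aa q * t) * exp (- aa q * t) = 1).
  { rewrite <- exp_plus. replace (aa q * t + - aa q * t) with 0 by ring. apply exp_0. }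
  apply Rmult_le_reg_l with (aa q). lra.
  apply Rle_trans with (exp (aa q * t - 1) * exp (- aa q * t)).
  - rewrite <- Rmult_assoc. apply Rmult_le_compat_r; lra.
  - rewrite E. replace (exp (aa q * t) * / exp 1 * exp (- aa q * t)) with
      ((exp (aa q * t) * exp (- aa q * t)) * / exp 1) by ring. rewrite E2.
    pose proof (exp_pos 1). right. field. lra.
Qed.

Lemma h_at_opt q : (2 <= q)%nat -> h q (/ aa q) = / (aa q * exp 1).
Proof.
  intros Hq. destruct (aa_bounds q Hq) as [[Ha1 Ha2] _]. unfold h.
  replace (- aa q * / aa q) with (- (1)) by (field; lra). rewrite exp_Ropp.
  rewrite Rinv_mult. reflexivity.
Qed.

Lemma h_incr q s t : (2 <= q)%nat -> 0 <= s <= t -> aa q * t <= 1 -> h q s <= h q t.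
Proof.
  intros Hq Hst Ht. destruct (aa_bounds q Hq) as [[Ha1 Ha2] _]. unfold h.
  replace (exp (- aa q * t)) with (exp (- aa q * (t - s)) * exp (- aa q * s)).
  2:{ rewrite <- exp_plus. f_equal. ring. }
  pose proof (exp_ineq1_le (- aa q * (t - s))). pose proof (exp_pos (- aa q * s)).
  assert (s <= t * exp (- aa q * (t - s))).
  { apply Rle_trans with (t * (1 + - aa q * (t - s))). nra. apply Rmult_le_compat_l; lra. }
  rewrite <- Rmult_assoc. apply Rmult_le_compat_r; lra.
Qed.

Lemma h_decr q s t : (2 <= q)%nat -> 1 <= aa q * s -> s <= t -> h q t <= h q s.
Proof.
  intros Hq Hs Hst. destruct (aa_bounds q Hq) as [[Ha1 Ha2] _]. unfold h.
  replace (exp (- aa q * s)) with (exp (aa q * (t - s)) * exp (- aa q * t)).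
  2:{ rewrite <- exp_plus. f_equal. ring. }
  pose proof (exp_ineq1_le (aa q * (t - s))). pose proof (exp_pos (- aa q * t)).
  assert (t <= s * exp (aa q * (t - s))).
  { apply Rle_trans with (s * (1 + aa q * (t - s))). nra. apply Rmult_le_compat_l; nra. }
  rewrite <- Rmult_assoc. apply Rmult_le_compat_r; lra.
Qed.

Lemma h_upper16 q t : (2 <= q)%nat -> 0 < t -> h q t <= 16 / t.
Proof.
  intros Hq Ht. destruct (aa_bounds q Hq) as [[Ha1 Ha2] _]. unfold h.
  assert (E : exp (aa q * t) = exp (aa q * t / 2) ^ 2).
  { rewrite exp_pow_n. f_equal. simpl. field. }
  pose proof (exp_ineq1_le (aa q * t / 2)).
  assert (Hb : t * t <= 16 * exp (aa q * t)).
  { rewrite E. simpl. assert (t / 4 <= exp (aa q * t / 2)) by nra. nra. }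
  replace (- aa q * t) with (- (aa q * t)) by ring. rewrite exp_Ropp.
  pose proof (exp_pos (aa q * t)).
  apply Rmult_le_reg_r with (t * exp (aa q * t)). nra.
  replace (t * / exp (aa q * t) * (t * exp (aa q * t))) with (t * t) by (field; lra).
  replace (16 / t * (t * exp (aa q * t))) with (16 * exp (aa q * t)) by (field; lra). auto.
Qed.

Lemma h_lower q t : (2 <= q)%nat -> 1 <= t <= INR q -> exp (- INR q) <= h q t.
Proof.
  intros Hq Ht. destruct (aa_bounds q Hq) as [[Ha1 Ha2] Ha3]. unfold h.
  apply Rle_trans with (exp (- aa q * t)).
  - apply exp_le. nra.
  - pose proof (exp_pos (- aa q * t)). nra.
Qed.

Lemma Rceil_nat y c : INR c - 1 < y <= INR c -> Rceil y = INR c.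
Proof.
  intros H. unfold Rceil, Int_part.
  assert (E : up (- y) = (- Z.of_nat c + 1)%Z).
  { symmetry. apply tech_up; rewrite plus_IZR, opp_IZR, <- INR_IZR_INZ; simpl; lra. }
  rewrite E. rewrite minus_IZR, plus_IZR, opp_IZR, <- INR_IZR_INZ. simpl. ring.
Qed.
Open Scope R_scope.

Lemma nat_lin n : (n < 2 ^ n)%nat.
Proof. induction n; simpl; lia. Qed.

Lemma nat_sq n : (n * n <= 4 * 2 ^ n)%nat.
Proof. induction n. simpl; lia. pose proof (nat_lin n). simpl. nia. Qed.

Lemma k_over_Qk q k : (2 <= q)%nat -> (1 <= k)%nat -> INR k / INR q ^ k <= 4 / INR k.
Proof.
  intros Hq Hk. pose proof (Q2 q Hq).
  assert (Hk' : 1 <= INR k) by (apply (le_INR 1); auto).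
  assert (H1 : INR k * INR k <= 4 * INR q ^ k).
  { apply Rle_trans with (4 * 2 ^ k). rewrite <- mult_INR.
    replace (4 * 2 ^ k) with (INR (4 * 2 ^ k)). apply le_INR, nat_sq.
    rewrite mult_INR, pow_INR. simpl. replace (1 + 1 + 1 + 1) with 4 by ring. replace (1 + 1) with 2 by ring. ring.
    apply Rmult_le_compat_l; [lra|]. apply pow_incr; lra. }
  pose proof (pow_lt (INR q) k ltac:(lra)).
  apply Rmult_le_reg_r with (INR q ^ k * INR k). nra.
  replace (INR k / INR q ^ k * (INR q ^ k * INR k)) with (INR k * INR k) by (field; lra).
  replace (4 / INR k * (INR q ^ k * INR k)) with (4 * INR q ^ k) by (field; lra). auto.
Qed.

Lemma dl_le_inv q k : (2 <= q)%nat -> dl q k <= / INR q ^ k.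
Proof.
  intros Hq. pose proof (Q2 q Hq). pose proof (dl_eq q k Hq). pose proof (pow_lt (INR q) k ltac:(lra)).
  simpl in *. apply Rmult_le_reg_r with (INR q * INR q ^ k). nra.
  replace (/ INR q ^ k * (INR q * INR q ^ k)) with (INR q) by (field; lra). lra.
Qed.

Lemma kdl q k : (2 <= q)%nat -> (1 <= k)%nat -> INR k * dl q k <= 4 / INR k.
Proof.
  intros Hq Hk. apply Rle_trans with (INR k / INR q ^ k); [|apply k_over_Qk; auto].
  unfold Rdiv. apply Rmult_le_compat_l. apply pos_INR. apply dl_le_inv; auto.
Qed.

Lemma one_minus_exp y : 0 <= y < 1 -> exp (- (y / (1 - y))) <= 1 - y.
Proof.
  intros Hy. rewrite exp_Ropp. pose proof (exp_ineq1_le (y / (1 - y))).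
  assert (1 + y / (1 - y) = / (1 - y)) by (field; lra).
  apply Rmult_le_reg_r with (exp (y / (1 - y)) * / (1 - y)).
  apply Rmult_lt_0_compat. apply exp_pos. apply Rinv_0_lt_compat; lra.
  pose proof (exp_pos (y / (1 - y))).
  replace (/ exp (y / (1 - y)) * (exp (y / (1 - y)) * / (1 - y))) with (/ (1 - y)) by (field; lra).
  replace ((1 - y) * (exp (y / (1 - y)) * / (1 - y))) with (exp (y / (1 - y))) by (field; lra). lra.
Qed.

Lemma pow_exp_le d n : 0 <= d <= 1 -> (1 - d) ^ n <= exp (- (INR n * d)).
Proof.
  intros Hd. replace (- (INR n * d)) with (INR n * - d) by ring. rewrite <- exp_pow_n.
  apply pow_incr. pose proof (exp_ineq1_le (- d)). lra.
Qed.

Definition Sk q n k := INR n / INR q ^ k * INR (A q k (n - k - 2)) / INR q ^ (n - k - 2).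

Lemma ndl q n k : (2 <= q)%nat -> INR n * dl q k = aa q * (INR n / INR q ^ k).
Proof. intros Hq. pose proof (Q2 q Hq). unfold dl, aa. simpl. field. split; [apply pow_nonzero|]; lra. Qed.

Lemma S_upper_core q n k : (2 <= q)%nat -> (1 <= k)%nat -> (k + 2 <= n)%nat ->
  Sk q n k * (1 - dl q k) ^ (2 * k + 2) <= h q (INR n / INR q ^ k).
Proof.
  intros Hq Hk Hkn. pose proof (Q2 q Hq) as HQ.
  assert (Hd : 0 <= dl q k <= 1) by (pose proof (dl_pos q k Hq); pose proof (dl_le q k Hq Hk); lra).
  set (L := (n - k - 2)%nat).
  pose proof (Ar_upper q k L Hq Hk) as HU.
  assert (HQL : 0 < INR q ^ L) by (apply pow_lt; lra).
  assert (HQk : 0 < INR q ^ k) by (apply pow_lt; lra).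
  assert (Hn : (L + (k + 2))%nat = n) by (unfold L; lia).
  assert (H1 : INR (A q k L) * (1 - dl q k) ^ (2 * k + 2) <= INR q ^ L * (1 - dl q k) ^ n).
  { replace (2 * k + 2)%nat with (k + (k + 2))%nat by lia. rewrite <- Hn. rewrite (pow_add _ k (k + 2)), (pow_add _ L (k + 2)).
    pose proof (pow_le (1 - dl q k) (k + 2) ltac:(lra)).
    replace (INR (A q k L) * ((1 - dl q k) ^ k * (1 - dl q k) ^ (k + 2))) with
      ((INR (A q k L) * (1 - dl q k) ^ k) * (1 - dl q k) ^ (k + 2)) by ring.
    replace (INR q ^ L * ((1 - dl q k) ^ L * (1 - dl q k) ^ (k + 2))) with
      ((INR q ^ L * (1 - dl q k) ^ L) * (1 - dl q k) ^ (k + 2)) by ring.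
    apply Rmult_le_compat_r; auto. }
  unfold Sk. fold L.
  apply Rle_trans with (INR n / INR q ^ k * (1 - dl q k) ^ n).
  - replace (INR n / INR q ^ k * INR (A q k L) / INR q ^ L * (1 - dl q k) ^ (2 * k + 2)) with
      ((INR n / INR q ^ k) / INR q ^ L * (INR (A q k L) * (1 - dl q k) ^ (2 * k + 2))) by (field; lra).
    apply Rle_trans with ((INR n / INR q ^ k) / INR q ^ L * (INR q ^ L * (1 - dl q k) ^ n)).
    apply Rmult_le_compat_l; auto. unfold Rdiv. apply Rmult_le_pos. apply Rmult_le_pos. apply pos_INR.
    left; apply Rinv_0_lt_compat; auto. left; apply Rinv_0_lt_compat; auto.
    right. field. lra.
  - unfold h. apply Rmult_le_compat_l. unfold Rdiv. apply Rmult_le_pos. apply pos_INR. left; apply Rinv_0_lt_compat; auto.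
    apply Rle_trans with (exp (- (INR n * dl q k))). apply pow_exp_le; auto.
    rewrite ndl by auto. right. f_equal. ring.
Qed.

Lemma Sk_nonneg q n k : (2 <= q)%nat -> 0 <= Sk q n k.
Proof.
  intros Hq. pose proof (Q2 q Hq). unfold Sk, Rdiv.
  repeat apply Rmult_le_pos; try apply pos_INR; left; apply Rinv_0_lt_compat, pow_lt; lra.
Qed.

Lemma h_nonneg q t : 0 <= t -> 0 <= h q t.
Proof. intros. unfold h. pose proof (exp_pos (- aa q * t)). nra. Qed.

Lemma S_upper_big q n k K : (2 <= q)%nat -> (1 <= k)%nat -> (k + 2 <= n)%nat -> (32 <= K)%nat -> (K <= k)%nat ->
  Sk q n k <= (1 + 32 / INR K) * h q (INR n / INR q ^ k).
Proof.
  intros Hq Hk Hkn HK HKk. pose proof (Q2 q Hq) as HQ.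
  assert (Hd : 0 <= dl q k <= 1) by (pose proof (dl_pos q k Hq); pose proof (dl_le q k Hq Hk); lra).
  pose proof (S_upper_core q n k Hq Hk Hkn) as Hc.
  pose proof (bern (dl q k) (2 * k + 2) Hd) as Hb.
  pose proof (kdl q k Hq Hk) as Hkd.
  assert (HKr : 32 <= INR K) by (replace 32 with (INR 32) by (simpl; ring); apply le_INR; auto).
  assert (HkK : INR K <= INR k) by (apply le_INR; auto).
  assert (Hy : 4 / INR k <= 4 / INR K).
  { unfold Rdiv. apply Rmult_le_compat_l; [lra|]. apply Rinv_le_contravar; lra. }
  set (y := 16 / INR K).
  assert (Hy1 : 0 <= y <= 1/2). { unfold y. split. unfold Rdiv; apply Rmult_le_pos; [lra|left; apply Rinv_0_lt_compat; lra].
    apply Rmult_le_reg_r with (INR K). lra. unfold Rdiv. rewrite Rmult_assoc, Rinv_l by lra. lra. }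
  assert (Hy2 : 4 * (4 / INR K) = y) by (unfold y; field; lra).
  assert (HI : INR (2 * k + 2) * dl q k <= y).
  { rewrite plus_INR, mult_INR. simpl. assert (1 <= INR k) by (apply (le_INR 1); auto). nra. }
  assert (Hw : 1 - y <= (1 - dl q k) ^ (2 * k + 2)) by lra.
  pose proof (Sk_nonneg q n k Hq). 
  assert (Hh : 0 <= h q (INR n / INR q ^ k)).
  { apply h_nonneg. unfold Rdiv. apply Rmult_le_pos. apply pos_INR. left; apply Rinv_0_lt_compat, pow_lt; lra. }
  assert (Sk q n k * (1 - y) <= h q (INR n / INR q ^ k)).
  { apply Rle_trans with (Sk q n k * (1 - dl q k) ^ (2 * k + 2)); auto. apply Rmult_le_compat_l; auto. }
  replace (32 / INR K) with (2 * y) by (unfold y; field; lra).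
  assert (E : (1 + 2 * y) * (1 - y) >= 1) by nra.
  apply Rle_trans with ((1 + 2 * y) * (Sk q n k * (1 - y))).
  - replace ((1 + 2 * y) * (Sk q n k * (1 - y))) with (((1 + 2 * y) * (1 - y)) * Sk q n k) by ring. nra.
  - apply Rmult_le_compat_l; lra.
Qed.

Lemma S_upper_small q n k K : (2 <= q)%nat -> (1 <= k)%nat -> (k + 2 <= n)%nat -> (k < K)%nat ->
  Sk q n k <= 16 * INR q ^ K / (INR n * (3 / 4) ^ (2 * K)).
Proof.
  intros Hq Hk Hkn HkK. pose proof (Q2 q Hq) as HQ.
  assert (Hd : 0 <= dl q k <= 1/4) by (pose proof (dl_pos q k Hq); pose proof (dl_le q k Hq Hk); lra).
  pose proof (S_upper_core q n k Hq Hk Hkn) as Hc.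
  assert (Hw : (3 / 4) ^ (2 * K) <= (1 - dl q k) ^ (2 * k + 2)).
  { apply Rle_trans with ((3 / 4) ^ (2 * k + 2)). apply pow_decr; [lra|lia]. apply pow_incr; lra. }
  assert (Hw0 : 0 < (3 / 4) ^ (2 * K)) by (apply pow_lt; lra).
  assert (Hn : 0 < INR n) by (apply lt_0_INR; lia).
  assert (HQk : 0 < INR q ^ k) by (apply pow_lt; lra).
  assert (Ht : 0 < INR n / INR q ^ k) by (unfold Rdiv; apply Rmult_lt_0_compat; auto; apply Rinv_0_lt_compat; auto).
  pose proof (h_upper16 q _ Hq Ht) as H16.
  pose proof (Sk_nonneg q n k Hq).
  assert (H1 : Sk q n k * (3 / 4) ^ (2 * K) <= 16 / (INR n / INR q ^ k)).
  { apply Rle_trans with (Sk q n k * (1 - dl q k) ^ (2 * k + 2)). apply Rmult_le_compat_l; auto. lra. }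
  assert (HQK : INR q ^ k <= INR q ^ K) by (apply Rle_pow; [lra|lia]).
  apply Rmult_le_reg_r with ((3 / 4) ^ (2 * K)); auto.
  apply Rle_trans with (16 / (INR n / INR q ^ k)); auto.
  replace (16 / (INR n / INR q ^ k)) with (16 * INR q ^ k / INR n) by (field; lra).
  replace (16 * INR q ^ K / (INR n * (3 / 4) ^ (2 * K)) * (3 / 4) ^ (2 * K)) with (16 * INR q ^ K / INR n) by (field; lra).
  unfold Rdiv. apply Rmult_le_compat_r. left; apply Rinv_0_lt_compat; auto. lra.
Qed.

Lemma Qk_gt_k q k : (2 <= q)%nat -> INR k < INR q ^ k.
Proof.
  intros Hq. pose proof (Q2 q Hq). apply Rlt_le_trans with (2 ^ k).
  replace (2 ^ k) with (INR (2 ^ k)) by (rewrite pow_INR; simpl; f_equal; ring).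
  apply lt_INR, nat_lin. apply pow_incr; lra.
Qed.

Lemma S_lower q n k K : (2 <= q)%nat -> (32 <= K)%nat -> (K <= k)%nat -> (2 * k + 2 <= n)%nat ->
  INR n / INR q ^ k <= INR q ^ 2 ->
  (1 - (1 + 24 * INR q ^ 2) / INR K) * h q (INR n / INR q ^ k) <= Sk q n k.
Proof.
  intros Hq HK HKk Hn Ht2. pose proof (Q2 q Hq) as HQ.
  assert (Hk : (1 <= k)%nat) by lia.
  pose proof (dl_pos q k Hq) as Hd0. pose proof (dl_le q k Hq Hk) as Hd1.
  assert (HKr : 32 <= INR K) by (replace 32 with (INR 32) by (simpl; ring); apply le_INR; auto).
  assert (HkK : INR K <= INR k) by (apply le_INR; auto).
  assert (Hk1 : 1 <= INR k) by (apply (le_INR 1); auto).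
  pose proof (kdl q k Hq Hk) as Hkd.
  assert (Hy : 4 / INR k <= 4 / INR K).
  { unfold Rdiv. apply Rmult_le_compat_l; [lra|]. apply Rinv_le_contravar; lra. }
  assert (HkdK : INR k * dl q k <= 4 / INR K) by lra.
  assert (H4K : 4 / INR K <= 1 / 8).
  { apply Rmult_le_reg_r with (INR K). lra. unfold Rdiv. rewrite Rmult_assoc, Rinv_l by lra. lra. }
  assert (Hkd4 : 4 * INR k * dl q k <= 1) by lra.
  set (P := (n - 2 * k - 2)%nat).
  assert (HL : (n - k - 2)%nat = (k + P)%nat) by (unfold P; lia).
  pose proof (Ar_lower q k P Hq Hk Hkd4) as HA.
  set (d := dl q k) in *. set (u := 1 - 2 * INR k * d).
  assert (Hu : 3/4 <= u <= 1) by (unfold u; nra).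
  set (e := ep q k). assert (Ee : e = d / u) by reflexivity.
  assert (He : 0 <= e < 1).
  { rewrite Ee. split. unfold Rdiv; apply Rmult_le_pos; [lra|left; apply Rinv_0_lt_compat; lra].
    apply Rmult_lt_reg_r with u. lra. unfold Rdiv. rewrite Rmult_assoc, Rinv_l by lra. nra. }
  set (x := (2 * INR k + 1) * d).
  assert (Hx : 0 <= x <= 12 / INR K) by (unfold x; nra).
  assert (Hx2 : x <= 1/2).
  { apply Rle_trans with (12 / INR K); [lra|].
    apply Rmult_le_reg_r with (INR K). lra. unfold Rdiv. rewrite Rmult_assoc, Rinv_l by lra. lra. }
  assert (Hee : e / (1 - e) <= d * (1 + 2 * x)).
  { assert (E1 : e / (1 - e) = d / (1 - x)) by (rewrite Ee; unfold x, u; field; split; nra).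
    rewrite E1. apply Rmult_le_reg_r with (1 - x). lra. unfold Rdiv. rewrite Rmult_assoc, Rinv_l by lra.
    assert (0 <= d * (x * (1 - 2 * x))) by (apply Rmult_le_pos; nra).
    replace (d * (1 + 2 * x) * (1 - x)) with (d + d * (x * (1 - 2 * x))) by ring. lra. }
  set (t := INR n / INR q ^ k).
  assert (HQk : 0 < INR q ^ k) by (apply pow_lt; lra).
  assert (HQP : 0 < INR q ^ P) by (apply pow_lt; lra).
  assert (Htpos : 0 <= t) by (unfold t, Rdiv; apply Rmult_le_pos; [apply pos_INR|left; apply Rinv_0_lt_compat; auto]).
  assert (Hnd : INR n * d = aa q * t) by (unfold d, t; apply ndl; auto).
  destruct (aa_bounds q Hq) as [[Ha1 Ha2] _].
  assert (S1 : t * (1 - / INR q ^ k) * (1 - e) ^ P <= Sk q n k).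
  { unfold Sk. rewrite HL. fold t.
    apply Rle_trans with (t * ((INR q ^ k - 1) * (INR q * (1 - e)) ^ P) / INR q ^ (k + P)).
    - right. rewrite Rpow_mult_distr, pow_add. field. lra.
    - unfold Rdiv. apply Rmult_le_compat_r. left; apply Rinv_0_lt_compat, pow_lt; lra.
      apply Rmult_le_compat_l; auto. }
  assert (S2 : exp (- (INR n * (e / (1 - e)))) <= (1 - e) ^ P).
  { apply Rle_trans with ((1 - e) ^ n). 2: apply pow_decr; [lra|unfold P; lia].
    replace (- (INR n * (e / (1 - e)))) with (INR n * - (e / (1 - e))) by ring. rewrite <- exp_pow_n.
    apply pow_incr. split. left; apply exp_pos. apply one_minus_exp; auto. }
  assert (S3 : exp (- (aa q * t)) * exp (- (2 * x * (aa q * t))) <= exp (- (INR n * (e / (1 - e))))).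
  { rewrite <- exp_plus. apply exp_le. rewrite <- Hnd. pose proof (pos_INR n). nra. }
  assert (S4 : 1 - 24 * INR q ^ 2 / INR K <= exp (- (2 * x * (aa q * t)))).
  { apply Rle_trans with (1 + - (2 * x * (aa q * t))); [|apply exp_ineq1_le].
    assert (aa q * t <= INR q ^ 2). { apply Rle_trans with (1 * t). apply Rmult_le_compat_r; lra. unfold t; lra. }
    assert (2 * x * (aa q * t) <= 2 * (12 / INR K) * INR q ^ 2).
    { apply Rmult_le_compat; nra. }
    replace (24 * INR q ^ 2 / INR K) with (2 * (12 / INR K) * INR q ^ 2) by (field; lra). lra. }
  assert (S5 : 1 - 1 / INR K <= 1 - / INR q ^ k).
  { pose proof (Qk_gt_k q k Hq). assert (/ INR q ^ k <= / INR K) by (apply Rinv_le_contravar; lra). lra. }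
  assert (HK1 : 0 <= 1 - 1 / INR K).
  { assert (1 / INR K <= 1). apply Rmult_le_reg_r with (INR K). lra. unfold Rdiv. rewrite Rmult_assoc, Rinv_l by lra. lra. lra. }
  unfold h. fold t. replace (- aa q * t) with (- (aa q * t)) by ring.
  pose proof (exp_pos (- (aa q * t))). pose proof (exp_pos (- (2 * x * (aa q * t)))).
  apply Rle_trans with (t * (1 - / INR q ^ k) * (exp (- (aa q * t)) * exp (- (2 * x * (aa q * t))))).
  2:{ apply Rle_trans with (t * (1 - / INR q ^ k) * (1 - e) ^ P); auto. apply Rmult_le_compat_l.
      apply Rmult_le_pos; auto. lra. lra. }
  set (E1 := exp (- (aa q * t))) in *. set (E2 := exp (- (2 * x * (aa q * t)))) in *.
  assert (HI : 1 - (1 + 24 * INR q ^ 2) / INR K <= (1 - 1 / INR K) * (1 - 24 * INR q ^ 2 / INR K)).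
  { assert (0 <= 1 / INR K * (24 * INR q ^ 2 / INR K)).
    { unfold Rdiv. apply Rmult_le_pos; apply Rmult_le_pos; try lra; try (left; apply Rinv_0_lt_compat; lra).
      pose proof (pow_le (INR q) 2); lra. }
    replace ((1 + 24 * INR q ^ 2) / INR K) with (1 / INR K + 24 * INR q ^ 2 / INR K) by (field; lra). nra. }
  assert (HJ : (1 - 1 / INR K) * (1 - 24 * INR q ^ 2 / INR K) <= (1 - / INR q ^ k) * E2).
  { apply Rle_trans with ((1 - 1 / INR K) * E2). apply Rmult_le_compat_l; auto.
    apply Rmult_le_compat_r; lra. }
  apply Rle_trans with (t * E1 * ((1 - 1 / INR K) * (1 - 24 * INR q ^ 2 / INR K))).
  - replace ((1 - (1 + 24 * INR q ^ 2) / INR K) * (t * E1)) with ((t * E1) * (1 - (1 + 24 * INR q ^ 2) / INR K)) by ring.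
    apply Rmult_le_compat_l; [apply Rmult_le_pos; lra|auto].
  - replace (t * (1 - / INR q ^ k) * (E1 * E2)) with ((t * E1) * ((1 - / INR q ^ k) * E2)) by ring.
    apply Rmult_le_compat_l; [apply Rmult_le_pos; lra|auto].
Qed.

Lemma c_exists q n : (2 <= q)%nat -> (2 <= n)%nat -> exists c, (1 <= c)%nat /\ (q ^ (c - 1) < n)%nat /\ (n <= q ^ c)%nat.
Proof.
  intros Hq Hn.
  assert (H : forall m, (n <= q ^ m)%nat -> exists c, (1 <= c)%nat /\ (q ^ (c - 1) < n)%nat /\ (n <= q ^ c)%nat).
  { induction m; intros Hm. simpl in Hm; lia.
    destruct (Nat.le_gt_cases n (q ^ m)) as [H1|H1]. apply IHm; auto.
    exists (S m). split; [lia|]. replace (S m - 1)%nat with m by lia. auto. }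
  apply (H n). pose proof (nat_lin n). assert (2 ^ n <= q ^ n)%nat by (apply Nat.pow_le_mono_l; lia). lia.
Qed.

Lemma c_small c : (5 <= c)%nat -> (2 * c + 2 <= 2 ^ (c - 1))%nat.
Proof.
  intros H. induction H. simpl. lia.
  replace (S m - 1)%nat with (S (m - 1)) by lia. simpl. lia.
Qed.

Lemma C1k_Sk n q k : (2 <= q)%nat -> (1 <= k)%nat -> (k + 2 <= n)%nat ->
  INR (C1k n q k) = INR q ^ n / INR n * aa q ^ 2 * Sk q n k.
Proof.
  intros Hq Hk Hn. pose proof (Q2 q Hq).
  rewrite (C1k_formula n q k (n - k - 2)) by lia.
  rewrite !mult_INR, minus_INR by lia. simpl INR.
  assert (E : INR q ^ n = INR q ^ k * INR q ^ (n - k - 2) * INR q ^ 2) by (rewrite <- !pow_add; f_equal; lia).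
  assert (0 < INR n) by (apply lt_0_INR; lia).
  unfold Sk, aa. rewrite E. field. repeat split; try lra; apply pow_nonzero; lra.
Qed.

Lemma ln_le' x y : 0 < x -> x <= y -> ln x <= ln y.
Proof. intros Hx [H|H]. left; apply ln_increasing; auto. subst; lra. Qed.

Lemma M_formula q n c : (2 <= q)%nat -> (2 <= c)%nat -> INR q ^ (c - 1) < INR n -> INR n <= INR q ^ c ->
  Rpower (INR q) (Fq q (Deltan q n)) =
  Rmax (h q (INR n / INR q ^ (c - 2))) (Rmax (h q (INR n / INR q ^ (c - 1))) (h q (INR n / INR q ^ c))).
Proof.
  intros Hq Hc H1 H2. pose proof (Q2 q Hq) as HQ.
  assert (Hl : 0 < ln (INR q)) by (rewrite <- ln_1; apply ln_increasing; lra).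
  assert (Hn : 0 < INR n) by (pose proof (pow_lt (INR q) (c - 1) ltac:(lra)); lra).
  set (y := ln (INR n) / ln (INR q)).
  assert (Hy : INR c - 1 < y <= INR c).
  { assert (E1 : ln (INR q ^ (c - 1)) = (INR c - 1) * ln (INR q)).
    { rewrite ln_pow by lra. rewrite minus_INR by lia. simpl. ring. }
    assert (E2 : ln (INR q ^ c) = INR c * ln (INR q)) by (rewrite ln_pow by lra; auto).
    pose proof (ln_increasing _ _ (pow_lt (INR q) (c - 1) ltac:(lra)) H1) as L1.
    pose proof (ln_le' _ _ Hn H2) as L2. rewrite E1 in L1. rewrite E2 in L2. unfold y. split.
    - apply Rmult_lt_reg_r with (ln (INR q)); auto. unfold Rdiv. rewrite Rmult_assoc, Rinv_l by lra. lra.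
    - apply Rmult_le_reg_r with (ln (INR q)); auto. unfold Rdiv. rewrite Rmult_assoc, Rinv_l by lra. lra. }
  assert (HD : Deltan q n = y - INR c).
  { unfold Deltan, logq. fold y. rewrite (Rceil_nat y c Hy). reflexivity. }
  assert (Hsh : forall m, (m <= c)%nat -> Rpower (INR q) (Deltan q n + INR m) = INR n / INR q ^ (c - m)).
  { intros m Hm. rewrite HD. rewrite <- (Rpower_pow (c - m)) by lra.
    unfold Rpower. rewrite minus_INR by auto.
    replace ((y - INR c + INR m) * ln (INR q)) with (ln (INR n) + - ((INR c - INR m) * ln (INR q))).
    2:{ unfold y. field. lra. }
    rewrite exp_plus, exp_ln, exp_Ropp by auto. reflexivity. }
  rewrite FqM by auto.
  rewrite <- (Hsh 2%nat) by lia. rewrite <- (Hsh 1%nat) by lia.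
  replace (INR n / INR q ^ c) with (INR n / INR q ^ (c - 0)) by (f_equal; f_equal; lia).
  rewrite <- (Hsh 0%nat) by lia. simpl INR. replace (Deltan q n + 0) with (Deltan q n) by ring.
  replace (1 + 1) with 2 by ring. reflexivity.
Qed.

Lemma div_pow_le q n a b : (2 <= q)%nat -> (a <= b)%nat -> 0 <= INR n -> INR n / INR q ^ b <= INR n / INR q ^ a.
Proof.
  intros Hq Hab Hn. pose proof (Q2 q Hq). unfold Rdiv. apply Rmult_le_compat_l; auto.
  apply Rinv_le_contravar. apply pow_lt; lra. apply Rle_pow; [lra|auto].
Qed.

Lemma h_all_le q n c k : (2 <= q)%nat -> (2 <= c)%nat -> INR q ^ (c - 1) < INR n -> INR n <= INR q ^ c ->
  h q (INR n / INR q ^ k) <=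
  Rmax (h q (INR n / INR q ^ (c - 2))) (Rmax (h q (INR n / INR q ^ (c - 1))) (h q (INR n / INR q ^ c))).
Proof.
  intros Hq Hc H1 H2. pose proof (Q2 q Hq) as HQ. destruct (aa_bounds q Hq) as [[Ha1 Ha2] Ha3].
  assert (Hn : 0 <= INR n) by apply pos_INR.
  assert (Hpos : forall j, 0 <= INR n / INR q ^ j).
  { intros j. unfold Rdiv. apply Rmult_le_pos; auto. left; apply Rinv_0_lt_compat, pow_lt; lra. }
  destruct (Nat.le_gt_cases c k) as [Hk|Hk].
  - apply Rle_trans with (h q (INR n / INR q ^ c)); [|eapply Rle_trans; [|apply Rmax_r]; apply Rmax_r].
    apply h_incr; auto. split; auto. apply div_pow_le; auto.
    assert (INR n / INR q ^ c <= 1).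
    { pose proof (pow_lt (INR q) c ltac:(lra)). apply Rmult_le_reg_r with (INR q ^ c); auto.
      unfold Rdiv. rewrite Rmult_assoc, Rinv_l by lra. lra. }
    pose proof (Hpos c). nra.
  - destruct (Nat.eq_dec k (c - 1)) as [E|E].
    + subst k. eapply Rle_trans; [|apply Rmax_r]. apply Rmax_l.
    + apply Rle_trans with (h q (INR n / INR q ^ (c - 2))); [|apply Rmax_l].
      apply h_decr; auto.
      * assert (INR q < INR n / INR q ^ (c - 2)).
        { pose proof (pow_lt (INR q) (c - 2) ltac:(lra)). apply Rmult_lt_reg_r with (INR q ^ (c - 2)); auto.
          unfold Rdiv. rewrite Rmult_assoc, Rinv_l by lra.
          replace (INR q * INR q ^ (c - 2)) with (INR q ^ (c - 1)); [lra|].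
          replace (c - 1)%nat with (S (c - 2)) by lia. reflexivity. }
        nra.
      * apply div_pow_le; auto; lia.
Qed.

Lemma last_case q n : (2 <= q)%nat -> 64 * exp (INR q) + 2 <= INR n ->
  INR q - 1 <= INR q ^ n / INR n * aa q ^ 2 * exp (- INR q).
Proof.
  intros Hq Hn. pose proof (Q2 q Hq) as HQ. destruct (aa_bounds q Hq) as [[Ha1 Ha2] _].
  pose proof (exp_pos (INR q)) as He.
  assert (Hn0 : 0 < INR n) by lra.
  assert (Hn1 : (1 <= n)%nat) by (apply INR_le; simpl; lra).
  assert (Hsq : INR (n - 1) * INR (n - 1) <= 4 * INR q ^ (n - 1)).
  { rewrite <- mult_INR. apply Rle_trans with (INR (4 * 2 ^ (n - 1))). apply le_INR, nat_sq.
    rewrite mult_INR, pow_INR. simpl. replace (1 + 1 + 1 + 1) with 4 by ring. replace (1 + 1) with 2 by ring.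
    apply Rmult_le_compat_l; [lra|]. apply pow_incr; lra. }
  rewrite minus_INR in Hsq by auto. simpl INR in Hsq.
  assert (HQn : INR q ^ n = INR q * INR q ^ (n - 1)) by (replace n with (S (n - 1)) at 1 by lia; reflexivity).
  assert (Hm : INR n / 2 <= INR n - 1) by lra.
  assert (H16 : INR n * (16 * exp (INR q)) <= (INR n - 1) * (INR n - 1)).
  { apply Rle_trans with (INR n / 2 * (INR n / 2)). nra. nra. }
  rewrite exp_Ropp. apply Rmult_le_reg_r with (INR n * exp (INR q)). nra.
  replace (INR q ^ n / INR n * aa q ^ 2 * / exp (INR q) * (INR n * exp (INR q))) with (INR q ^ n * aa q ^ 2) by (field; lra).
  rewrite HQn.
  assert (INR q ^ (n - 1) >= INR n * (4 * exp (INR q))) by nra.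
  assert (aa q ^ 2 >= 1/4) by (simpl; nra).
  assert (0 <= INR q ^ (n - 1)) by (apply pow_le; lra).
  assert (INR q * INR q ^ (n - 1) * aa q ^ 2 >= INR q * INR q ^ (n - 1) * (1/4)).
  { apply Rle_ge. apply Rmult_le_compat_l. nra. lra. }
  assert (INR q * INR q ^ (n - 1) * (1/4) >= INR q * (INR n * exp (INR q))) by nra.
  assert ((INR q - 1) * (INR n * exp (INR q)) <= INR q * (INR n * exp (INR q))) by nra.
  lra.
Qed.

Lemma part1 q : (2 <= q)%nat ->
  Un_cv (fun n : nat =>
           INR (C1max n q) /
           ((INR q ^ n / INR n) * ((INR q - 1) / INR q) ^ 2 * Rpower (INR q) (Fq q (Deltan q n)))) 1.
Proof.
  intros Hq eps Heps. pose proof (Q2 q Hq) as HQ. destruct (aa_bounds q Hq) as [[Ha1 Ha2] Ha3].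
  destruct (INR_unbounded (Rmax 32 ((66 + 48 * INR q ^ 2) / eps))) as [K HK].
  assert (HK32r : 32 < INR K) by (pose proof (Rmax_l 32 ((66 + 48 * INR q ^ 2) / eps)); lra).
  assert (HKe : (66 + 48 * INR q ^ 2) / eps < INR K) by (pose proof (Rmax_r 32 ((66 + 48 * INR q ^ 2) / eps)); lra).
  assert (HK32 : (32 <= K)%nat).
  { apply INR_le. left. replace (INR 32) with 32 by (simpl; ring). auto. }
  assert (HKeps : (66 + 48 * INR q ^ 2) < eps * INR K).
  { apply Rmult_lt_reg_r with (/ eps). apply Rinv_0_lt_compat; auto.
    replace (eps * INR K * / eps) with (INR K) by (field; lra). auto. }
  set (w := (3 / 4) ^ (2 * K)).
  assert (Hw : 0 < w) by (apply pow_lt; lra).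
  destruct (INR_unbounded (16 * INR q ^ K / (w * exp (- INR q)))) as [N1 HN1].
  destruct (INR_unbounded (64 * exp (INR q) + 2)) as [N2 HN2].
  exists (N1 + N2 + q ^ (K + 1) + 3)%nat. intros n Hn.
  assert (HnN1 : INR N1 <= INR n) by (apply le_INR; lia).
  assert (HnN2 : INR N2 <= INR n) by (apply le_INR; lia).
  destruct (c_exists q n Hq ltac:(lia)) as [c [Hc1 [Hc2 Hc3]]].
  assert (HcK : (K + 2 <= c)%nat).
  { destruct (Nat.le_gt_cases (K + 2) c) as [H|H]; auto. exfalso.
    assert (q ^ c <= q ^ (K + 1))%nat by (apply Nat.pow_le_mono_r; lia). lia. }
  assert (Hc2n : (2 * c + 2 <= n)%nat).
  { pose proof (c_small c ltac:(lia)). assert (2 ^ (c - 1) <= q ^ (c - 1))%nat by (apply Nat.pow_le_mono_l; lia). lia. }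
  assert (Hr1 : INR q ^ (c - 1) < INR n) by (rewrite <- pow_INR; apply lt_INR; auto).
  assert (Hr2 : INR n <= INR q ^ c) by (rewrite <- pow_INR; apply le_INR; auto).
  assert (Hn0 : 0 < INR n) by (apply lt_0_INR; lia).
  rewrite (M_formula q n c Hq ltac:(lia) Hr1 Hr2).
  set (M := Rmax (h q (INR n / INR q ^ (c - 2))) (Rmax (h q (INR n / INR q ^ (c - 1))) (h q (INR n / INR q ^ c)))).
  assert (HMall : forall k, h q (INR n / INR q ^ k) <= M) by (intros k; apply h_all_le; auto; lia).
  assert (HMlow : exp (- INR q) <= M).
  { apply Rle_trans with (h q (INR n / INR q ^ (c - 1))); auto. apply h_lower; auto.
    pose proof (pow_lt (INR q) (c - 1) ltac:(lra)). split.
    - apply Rmult_le_reg_r with (INR q ^ (c - 1)); auto. unfold Rdiv. rewrite Rmult_assoc, Rinv_l by lra. lra.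
    - apply Rmult_le_reg_r with (INR q ^ (c - 1)); auto. unfold Rdiv. rewrite Rmult_assoc, Rinv_l by lra.
      replace (INR q * INR q ^ (c - 1)) with (INR q ^ c); [lra|]. replace c with (S (c - 1)) at 1 by lia. reflexivity. }
  pose proof (exp_pos (- INR q)).
  fold (aa q).
  set (B := INR q ^ n / INR n * aa q ^ 2).
  assert (HB : 0 < B).
  { unfold B. apply Rmult_lt_0_compat. unfold Rdiv; apply Rmult_lt_0_compat. apply pow_lt; lra.
    apply Rinv_0_lt_compat; auto. apply pow_lt; lra. }
  assert (HBM : 0 < B * M) by (apply Rmult_lt_0_compat; lra).
  assert (Hup : INR (C1max n q) <= (1 + eps / 2) * (B * M)).
  { destruct (C1max_cases n q) as [E|[k [Hk1 [Hk2 E]]]]; rewrite E.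
    - simpl. nra.
    - destruct (Nat.eq_dec (k + 1) n) as [Ek|Ek].
      + rewrite C1k_last by lia. rewrite minus_INR by lia. simpl INR.
        pose proof (last_case q n Hq ltac:(lra)). fold B in H0.
        assert (B * exp (- INR q) <= B * M) by (apply Rmult_le_compat_l; lra). nra.
      + rewrite C1k_Sk by lia. fold B.
        replace ((1 + eps / 2) * (B * M)) with (B * ((1 + eps / 2) * M)) by ring.
        apply Rmult_le_compat_l; [lra|].
        destruct (Nat.le_gt_cases K k) as [HKk|HKk].
        * eapply Rle_trans. apply (S_upper_big q n k K); auto; lia.
          assert (32 / INR K <= eps / 2).
          { apply Rmult_le_reg_r with (INR K). lra. unfold Rdiv. rewrite Rmult_assoc, Rinv_l by lra.
            assert (0 <= INR q ^ 2) by (apply pow_le; lra). nra. }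
          pose proof (HMall k). assert (0 <= h q (INR n / INR q ^ k)).
          { apply h_nonneg. unfold Rdiv. apply Rmult_le_pos. apply pos_INR. left; apply Rinv_0_lt_compat, pow_lt; lra. }
          assert (0 <= 32 / INR K) by (unfold Rdiv; apply Rmult_le_pos; [lra | left; apply Rinv_0_lt_compat; lra]).
          apply Rmult_le_compat; lra.
        * eapply Rle_trans. apply (S_upper_small q n k K); auto; lia.
          fold w. apply Rle_trans with (exp (- INR q)); [|nra].
          apply Rmult_le_reg_r with (INR n * w). nra.
          replace (16 * INR q ^ K / (INR n * w) * (INR n * w)) with (16 * INR q ^ K) by (field; lra).
          apply Rmult_le_reg_r with (/ (w * exp (- INR q))). apply Rinv_0_lt_compat; nra.
          replace (exp (- INR q) * (INR n * w) * / (w * exp (- INR q))) with (INR n) by (field; lra). unfold Rdiv in HN1. lra. }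
  assert (Hlo : (1 - eps / 2) * (B * M) <= INR (C1max n q)).
  { assert (Hks : exists k, (c - 2 <= k <= c)%nat /\ h q (INR n / INR q ^ k) = M).
    { unfold M, Rmax. destruct (Rle_dec (h q (INR n / INR q ^ (c - 1))) (h q (INR n / INR q ^ c))).
      - destruct (Rle_dec (h q (INR n / INR q ^ (c - 2))) (h q (INR n / INR q ^ c))).
        exists c; split; auto; lia. exists (c - 2)%nat; split; auto; lia.
      - destruct (Rle_dec (h q (INR n / INR q ^ (c - 2))) (h q (INR n / INR q ^ (c - 1)))).
        exists (c - 1)%nat; split; auto; lia. exists (c - 2)%nat; split; auto; lia. }
    destruct Hks as [k [Hk EM]].
    apply Rle_trans with (INR (C1k n q k)); [|apply le_INR, C1max_ge; lia].
    rewrite C1k_Sk by lia. fold B.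
    replace ((1 - eps / 2) * (B * M)) with (B * ((1 - eps / 2) * M)) by ring.
    apply Rmult_le_compat_l; [lra|].
    eapply Rle_trans; [|apply (S_lower q n k K); auto; try lia].
    - rewrite EM. apply Rmult_le_compat_r. pose proof (HMall k). lra.
      assert ((1 + 24 * INR q ^ 2) / INR K <= eps / 2).
      { apply Rmult_le_reg_r with (INR K). lra. unfold Rdiv. rewrite Rmult_assoc, Rinv_l by lra.
        assert (0 <= INR q ^ 2) by (apply pow_le; lra). nra. }
      lra.
    - assert (INR q ^ c <= INR q ^ k * INR q ^ 2) by (rewrite <- pow_add; apply Rle_pow; [lra|lia]).
      pose proof (pow_lt (INR q) k ltac:(lra)).
      apply Rmult_le_reg_r with (INR q ^ k); auto. unfold Rdiv. rewrite Rmult_assoc, Rinv_l by lra. lra. }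
  unfold R_dist. apply Rabs_def1.
  - idtac.
    assert (INR (C1max n q) / (B * M) <= 1 + eps / 2).
    { apply Rmult_le_reg_r with (B * M); auto. unfold Rdiv. rewrite Rmult_assoc, Rinv_l by lra. lra. }
    unfold B in *. lra.
  - assert (1 - eps / 2 <= INR (C1max n q) / (B * M)).
    { apply Rmult_le_reg_r with (B * M); auto. unfold Rdiv. rewrite Rmult_assoc, Rinv_l by lra. lra. }
    unfold B in *. lra.
Qed.

Lemma part2 q : (2 <= q)%nat -> forall D : R, -1 < D <= 0 ->
  ((INR q - 1) / INR q) ^ 2 * Rpower (INR q) (Fq q D) <= (INR q - 1) / (exp 1 * INR q).
Proof.
  intros Hq D _. pose proof (Q2 q Hq) as HQ. destruct (aa_bounds q Hq) as [[Ha1 Ha2] Ha3].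
  fold (aa q). rewrite FqM by auto.
  assert (HM : Rmax (h q (Rpower (INR q) (D + 2))) (Rmax (h q (Rpower (INR q) (D + 1))) (h q (Rpower (INR q) D))) <= / (aa q * exp 1)).
  { repeat apply Rmax_lub; apply h_max; auto. }
  pose proof (exp_pos 1).
  apply Rle_trans with (aa q ^ 2 * / (aa q * exp 1)).
  apply Rmult_le_compat_l; auto. apply pow_le; lra.
  right. unfold aa. field. lra.
Qed.

Lemma Un_cv_Rmax u v l m : Un_cv u l -> Un_cv v m -> Un_cv (fun i => Rmax (u i) (v i)) (Rmax l m).
Proof.
  intros Hu Hv eps Heps. destruct (Hu eps Heps) as [N1 H1]. destruct (Hv eps Heps) as [N2 H2].
  exists (N1 + N2)%nat. intros n Hn. specialize (H1 n ltac:(lia)). specialize (H2 n ltac:(lia)).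
  unfold R_dist in *. apply Rabs_def2 in H1. apply Rabs_def2 in H2. apply Rabs_def1;
  unfold Rmax; destruct (Rle_dec (u n) (v n)); destruct (Rle_dec l m); lra.
Qed.

Lemma Un_cv_sub u l phi : (forall k, (phi k < phi (S k))%nat) -> Un_cv u l -> Un_cv (fun k => u (phi k)) l.
Proof.
  intros Hphi Hu eps Heps. destruct (Hu eps Heps) as [N HN]. exists N. intros n Hn.
  apply HN. assert (forall k, (k <= phi k)%nat).
  { induction k. lia. specialize (Hphi k). lia. }
  specialize (H n). lia.
Qed.

Lemma Un_cv_ext_ev u v l : (forall k, (1 <= k)%nat -> u k = v k) -> Un_cv u l -> Un_cv v l.
Proof.
  intros He Hu eps Heps. destruct (Hu eps Heps) as [N HN]. exists (N + 1)%nat. intros n Hn.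
  rewrite <- He by lia. apply HN. lia.
Qed.

Lemma Un_cv_const c : Un_cv (fun _ => c) c.
Proof. intros eps Heps. exists 0%nat. intros. unfold R_dist. rewrite Rminus_diag, Rabs_R0. auto. Qed.

Lemma hh_cont q a x : continuity_pt (fun y => h q (Rpower (INR q) (y + a))) x.
Proof. unfold h, Rpower. reg. Qed.

Lemma part3 q : (2 <= q)%nat -> forall phi : nat -> nat,
     (forall k, (phi k < phi (S k))%nat) ->
     Un_cv (fun k => Deltan q (phi k)) (- logq q (INR q - 1)) ->
     Un_cv (fun k => INR (C1max (phi k) q) * INR (phi k) / INR q ^ (phi k))
           ((INR q - 1) / (exp 1 * INR q)).
Proof.
  intros Hq phi Hphi HD. pose proof (Q2 q Hq) as HQ. destruct (aa_bounds q Hq) as [[Ha1 Ha2] Ha3].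
  set (Ds := - logq q (INR q - 1)).
  set (G := fun D => Rmax (h q (Rpower (INR q) (D + 2))) (Rmax (h q (Rpower (INR q) (D + 1))) (h q (Rpower (INR q) (D + 0))))).
  assert (HG : forall D, Rpower (INR q) (Fq q D) = G D).
  { intros D. rewrite FqM by auto. unfold G. replace (D + 0) with D by ring. reflexivity. }
  assert (HGpos : forall D, 0 < G D).
  { intros D. unfold G. eapply Rlt_le_trans; [|apply Rmax_l]. unfold h.
    apply Rmult_lt_0_compat. unfold Rpower. apply exp_pos. apply exp_pos. }
  assert (HGcv : Un_cv (fun k => G (Deltan q (phi k))) (G Ds)).
  { unfold G. apply Un_cv_Rmax; [|apply Un_cv_Rmax];
    apply (continuity_seq (fun y => h q (Rpower (INR q) (y + _)))); auto; apply hh_cont. }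
  assert (HGs : G Ds = / (aa q * exp 1)).
  { apply Rle_antisym. unfold G. repeat apply Rmax_lub; apply h_max; auto.
    unfold G. eapply Rle_trans; [|apply Rmax_r]. eapply Rle_trans; [|apply Rmax_l].
    rewrite <- h_at_opt by auto. right. f_equal.
    unfold Ds, logq, Rpower. 
    assert (Hl : 0 < ln (INR q)) by (rewrite <- ln_1; apply ln_increasing; lra).
    replace ((- (ln (INR q - 1) / ln (INR q)) + 1) * ln (INR q)) with (ln (INR q) + - ln (INR q - 1)) by (field; lra).
    rewrite exp_plus, exp_Ropp, !exp_ln by lra. unfold aa. field. lra. }
  pose proof (Un_cv_sub _ _ phi Hphi (part1 q Hq)) as H1.
  pose proof (CV_mult _ _ _ _ (CV_mult _ _ _ _ H1 (Un_cv_const (aa q ^ 2))) HGcv) as H2.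
  replace ((INR q - 1) / (exp 1 * INR q)) with (1 * aa q ^ 2 * G Ds).
  2:{ rewrite HGs. pose proof (exp_pos 1). unfold aa. field. lra. }
  apply (Un_cv_ext_ev _ _ _ ) with (2 := H2).
  intros k Hk. simpl. rewrite HG. fold (aa q).
  assert (Hk1 : (1 <= phi k)%nat) by (assert (forall j, (j <= phi j)%nat) by (induction j; [lia|specialize (Hphi j); lia]); specialize (H k); lia).
  assert (Hn : 0 < INR (phi k)) by (apply lt_0_INR; lia).
  pose proof (HGpos (Deltan q (phi k))). pose proof (pow_lt (INR q) (phi k) ltac:(lra)).
  field. repeat split; try lra; try (apply pow_nonzero; lra).
Qed.

Open Scope R_scope.

Theorem theorem2 (q : nat) (hq : (2 <= q)%nat) :
  (* asymptotics *)
  Un_cv (fun n : nat =>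
           INR (C1max n q) /
           ((INR q ^ n / INR n) * ((INR q - 1) / INR q) ^ 2 * Rpower (INR q) (Fq q (Deltan q n))))
        1
  /\
  (* upper bound on the constant *)
  (forall D : R, -1 < D <= 0 ->
     ((INR q - 1) / INR q) ^ 2 * Rpower (INR q) (Fq q D) <= (INR q - 1) / (exp 1 * INR q))
  /\
  (* tightness along subsequences with Delta_n -> -log_q(q-1) *)
  (forall phi : nat -> nat,
     (forall k, (phi k < phi (S k))%nat) ->
     Un_cv (fun k => Deltan q (phi k)) (- logq q (INR q - 1)) ->
     Un_cv (fun k => INR (C1max (phi k) q) * INR (phi k) / INR q ^ (phi k))
           ((INR q - 1) / (exp 1 * INR q))).
Proof.
  split; [|split].
  - apply part1; auto.
  - apply part2; auto.
  - apply part3; auto.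
Qed.
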